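(* Let $n,m$ be positive integers with $2(m+1)\le n$. Then $\gamma_{gr}(C_n^m)=n-2m$.
   Context: $C_n^m$ has vertex set $[n]$, distinct vertices adjacent iff their distance in the cycle $1,2,\dots,n,1$ is at most $m$. $\gamma_{gr}$ is the Grundy domination number: the maximum length of a sequence $(v_1,\dots,v_k)$ of distinct vertices whose set is dominating and such that each $N[v_i]\setminus\bigcup_{j<i}N[v_j]$ is non-empty ($N[\cdot]$ the closed neighborhood). *)

(* Defs.v *)
From mathcomp Require Import all_boot all_order.
Set Implicit Arguments. Unset Strict Implicit. Unset Printing Implicit Defensive.

(* Vertices of C_n^m are 'I_n (representing 1..n as 0..n-1). *)

Definition cdist (n : nat) (i j : 'I_n) : nat :=
  let d := if i <= j then j - i else i - j in minn d (n - d).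

Definition cnbh (n m : nat) (v : 'I_n) : {set 'I_n} :=
  [set u : 'I_n | (u == v) || (cdist u v <= m)].

Definition nbh_union (n m : nat) (s : seq 'I_n) : {set 'I_n} :=
  \bigcup_(v <- s) cnbh m v.

Definition dominating_seq (n m : nat) (s : seq 'I_n) : bool :=
  nbh_union m s == [set: 'I_n].

Definition footprinting (n m : nat) (s : seq 'I_n) : bool :=
  [forall i : 'I_(size s),
     (cnbh m (tnth (in_tuple s) i) :\: nbh_union m (take i s)) != set0].

Definition grundy_dom_seq (n m : nat) (s : seq 'I_n) : bool :=
  [&& uniq s, dominating_seq m s & footprinting m s].

Definition is_grundy_dom_number (n m k : nat) : Prop :=
  (exists s : seq 'I_n, grundy_dom_seq m s /\ size s = k) /\
  (forall s : seq 'I_n, grundy_dom_seq m s -> size s <= k).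

(* Main.v *)
Require Import Defs.
From mathcomp Require Import all_boot all_order.
From mathcomp Require Import zify.

Lemma in_nbh_union n m (s : seq 'I_n) x :
  (x \in nbh_union m s) = has (fun v => x \in cnbh m v) s.
Proof.
elim: s => [|v s IH]; first by rewrite /nbh_union big_nil inE.
by rewrite /nbh_union big_cons inE -/(nbh_union m s) IH.
Qed.

Lemma cnbh_sub n m (s : seq 'I_n) v x :
  v \in s -> x \in cnbh m v -> x \in nbh_union m s.
Proof. by move=> vs xv; rewrite in_nbh_union; apply/hasP; exists v. Qed.

Definition wnb (n m v k : nat) : nat :=
  if m <= v + k then (if v + k - m < n then v + k - m else v + k - m - n)
  else v + n + k - m.

Lemma card_cnbh n m (v : 'I_n.+1) : 2 * m + 1 <= n.+1 ->
  2 * m + 1 <= #|cnbh m v|.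
Proof.
move=> hn.
pose f := fun k : 'I_(2 * m + 1) => (inord (wnb n.+1 m v k) : 'I_n.+1).
have vn := ltn_ord v.
have wlt : forall k : 'I_(2 * m + 1), wnb n.+1 m v k < n.+1.
  move=> k; have := ltn_ord k; rewrite /wnb; case: ifP => ?; [case: ifP => ?|]; lia.
have finj : injective f.
  move=> k1 k2; rewrite /f => /(congr1 (@nat_of_ord _)); rewrite !inordK // => e.
  apply/val_inj => /=; move: e; have := ltn_ord k1; have := ltn_ord k2.
  rewrite /wnb; repeat (case: ifP => ?); lia.
have <- : #|f @: 'I_(2 * m + 1)| = 2 * m + 1 by rewrite card_imset // card_ord.
apply: subset_leq_card; apply/subsetP => x /imsetP [k _ ->].
rewrite inE; apply/orP; right; rewrite /cdist /f inordK //.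
have := ltn_ord k; rewrite /wnb; repeat (case: ifP => ?); lia.
Qed.

Lemma upper n m (s : seq 'I_n.+1) : 2 * m + 1 <= n.+1 -> footprinting m s ->
  size s <= n.+1 - 2 * m.
Proof.
case: s => [|v0 s'] hn; first by [].
set s := v0 :: s' => /forallP hf.
have hg : forall i : 'I_(size s), exists x,
    x \in cnbh m (nth v0 s i) :\: nbh_union m (take i s).
  move=> i; have := hf i; rewrite (tnth_nth v0) /= => /set0Pn [x hx]; by exists x.
pose g i := xchoose (hg i).
have gP : forall i, g i \in cnbh m (nth v0 s i) :\: nbh_union m (take i s).
  move=> i; exact: xchooseP.
have inT : forall a b : nat, a < b -> b <= size s -> nth v0 s a \in take b s.
  move=> a b ab bs; rewrite -(nth_take v0 ab); apply: mem_nth; rewrite size_takel //.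
have gne : forall a b : 'I_(size s), a < b -> g a != g b.
  move=> a b ab; apply/eqP => e.
  have := gP b; rewrite inE => /andP [hb _]; move: hb; rewrite -e.
  have := gP a; rewrite inE => /andP [_ ha].
  by rewrite (@cnbh_sub _ _ _ _ _ (inT _ _ ab (ltnW (ltn_ord b))) ha).
pose h (i : 'I_(size s')) := g (lift ord0 i).
have hinj : injective h.
  move=> i j e; apply/eqP; case: (ltngtP i j) => c //.
  - have := gne (lift ord0 i) (lift ord0 j); rewrite /= /bump /= !add1n ltnS => /(_ c).
    by rewrite /h in e; rewrite e eqxx.
  - have := gne (lift ord0 j) (lift ord0 i); rewrite /= /bump /= !add1n ltnS => /(_ c).
    by rewrite /h in e; rewrite e eqxx.
  - by apply/eqP/val_inj.
have hsub : h @: 'I_(size s') \subset ~: cnbh m v0.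
  apply/subsetP => x /imsetP [i _ ->]; rewrite inE /h; apply/negP => hx.
  have := gP (lift ord0 i); rewrite inE => /andP [/negP + _]; apply.
  move: hx; apply: cnbh_sub.
  have -> : v0 = nth v0 s 0 by [].
  apply: inT => /=; rewrite /bump /=; last by rewrite add1n ltnS ltnW.
  lia.
have := subset_leq_card hsub; rewrite card_imset // card_ord.
have := cardsC (cnbh m v0); rewrite card_ord.
have := @card_cnbh _ _ v0 hn; rewrite /s /=; lia.
Qed.

Lemma cdist_inord n (a b : nat) : a < n.+1 -> b < n.+1 ->
  cdist (inord a : 'I_n.+1) (inord b) =
  minn (if a <= b then b - a else a - b) (n.+1 - (if a <= b then b - a else a - b)).
Proof. by move=> ha hb; rewrite /cdist !inordK. Qed.

Lemma exist_seq n m : 0 < m -> 2 * (m + 1) <= n.+1 ->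
  exists s : seq 'I_n.+1, grundy_dom_seq m s /\ size s = n.+1 - 2 * m.
Proof.
move=> hm hn; set K := n.+1 - 2 * m; have hK : K = n.+1 - 2 * m by [].
pose f := fun k : nat => (inord k : 'I_n.+1).
exists (map f (iota 0 K)); split; last by rewrite size_map size_iota.
have nthE : forall i, i < K -> nth ord0 (map f (iota 0 K)) i = f i.
  by move=> i hi; rewrite (nth_map 0) ?size_iota // nth_iota.
have fin : forall k, k \in iota 0 K -> f k \in map f (iota 0 K).
  by move=> k hk; apply: map_f.
apply/and3P; split.
- rewrite map_inj_in_uniq ?iota_uniq // => a b; rewrite !mem_iota => ha hb.
  move=> /(congr1 (@nat_of_ord _)); rewrite !inordK; lia.
- apply/eqP/setP => u; rewrite inE in_nbh_union; apply/hasP.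
  have hu := ltn_ord u.
  case: (boolP ((u <= m) || (n.+1 - m <= u))) => c.
  + exists (f 0); first by apply: fin; rewrite mem_iota; lia.
    rewrite inE; apply/orP; right.
    rewrite -{1}(inord_val u) /f cdist_inord //; try lia.
    case: ifP => ?; lia.
  + exists (f (u - m)); first by apply: fin; rewrite mem_iota; lia.
    rewrite inE; apply/orP; right.
    rewrite -{1}(inord_val u) /f cdist_inord //; try lia.
    case: ifP => ?; lia.
- apply/forallP => i; rewrite (tnth_nth ord0) /=.
  have hi : i < K by rewrite -{2}(size_iota 0 K) -(size_map f); exact: ltn_ord.
  rewrite nthE //; apply/set0Pn.
  case: (posnP i) => i0.
  + exists (f 0); rewrite inE in_nbh_union i0 take0 /= inE eqxx //=.
  + exists (f (i + m)); rewrite inE in_nbh_union -map_take take_iota has_map.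
    apply/andP; split.
    * apply/hasPn => j0; have [j ->] : exists j : nat, j0 = j by exists j0.
      rewrite mem_iota => hj /=.
      rewrite inE negb_or; apply/andP; split.
      - apply/eqP => /(congr1 (@nat_of_ord _)); rewrite !inordK; try lia.
      - rewrite cdist_inord; try lia. case: ifP => ?; lia.
    * rewrite inE; apply/orP; right; rewrite cdist_inord; try lia.
      case: ifP => ?; lia.
Qed.

Theorem corollary1 (n m : nat) :
  0 < n -> 0 < m -> 2 * (m + 1) <= n ->
  is_grundy_dom_number n m (n - 2 * m).
Proof.
case: n => [//|n] _ hm hn; split; first exact: exist_seq.
move=> s /and3P [_ _ hf]; apply: upper => //; lia.
Qed.
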